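(* Let $s$ be a positive integer. There exists a linear $(2,s-1,s,2)$-AONT if and only if $s\ge4$.
   Context: For integers $1\le t_i\le t_o\le s$, a linear $(t_i,t_o,s,q)$-AONT is given by an invertible $s\times s$ matrix $M$ over $\mathbb{F}_q$ defining the map $\mathbf{x}\mapsto\mathbf{y}=\mathbf{x}M^{-1}$ on row vectors of $\mathbb{F}_q^s$, such that for every set $I$ of $t_i$ input coordinates and every set $J$ of $s-t_o$ output coordinates, the pair $((x_i)_{i\in I},(y_j)_{j\in J})$ takes every value in $\mathbb{F}_q^{t_i+s-t_o}$ equally often as $\mathbf{x}$ ranges over $\mathbb{F}_q^s$. Equivalently, $M$ is invertible and every $t_o\times t_i$ submatrix of $M$ has rank $t_i$. (Such an object requires $t_i\le t_o$, so none exists with $t_i=2>t_o=s-1$.) *)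

(* Defs.v *)
From mathcomp Require Import all_boot all_algebra.
Set Implicit Arguments. Unset Strict Implicit. Unset Printing Implicit Defensive.
Import GRing.Theory.
Local Open Scope ring_scope.

Definition submx_set (F : fieldType) (s : nat) (M : 'M[F]_s)
    (I J : {set 'I_s}) : 'M[F]_(#|I|, #|J|) :=
  \matrix_(i < #|I|, j < #|J|) M (@enum_val _ (mem I) i) (@enum_val _ (mem J) j).

(* M defines a linear (ti, to, s, q)-AONT over F (with q = #|F|):
   1 <= ti <= to <= s, M invertible, and every to x ti submatrix has rank ti. *)
Definition linear_AONT (F : fieldType) (ti to s : nat) (M : 'M[F]_s) : Prop :=
  [/\ (1 <= ti)%N, (ti <= to)%N, (to <= s)%N, M \in unitmx &
    forall I J : {set 'I_s}, #|I| = to -> #|J| = ti ->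
      \rank (submx_set M I J) = ti].

(* Main.v *)
Require Import Defs.
From mathcomp Require Import all_boot all_algebra zify.
Import GRing.Theory.
Local Open Scope ring_scope.
Lemma det22 (R : comNzRingType) (A : 'M[R]_2) : \det A = A 0 0 * A 1 1 - A 0 1 * A 1 0.
Proof.
rewrite (expand_det_row _ 0) !big_ord_recl big_ord0 addr0 /cofactor !det_mx11 !mxE /=.
rewrite expr0 expr1 !mul1r mulN1r mulrN.
congr (_ * _ - _ * _); congr (A _ _); apply/val_inj => //.
Qed.

Lemma rank_ge2 (F : fieldType) s (M : 'M[F]_s) (I J : {set 'I_s}) r1 r2 a b :
  r1 \in I -> r2 \in I -> a \in J -> b \in J ->
  M r1 a * M r2 b - M r1 b * M r2 a != 0 -> (2 <= \rank (submx_set M I J))%N.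
Proof.
move=> h1 h2 ha hb hdet.
pose f : 'I_2 -> 'I_#|I| := fun i => if i == 0 then enum_rank_in h1 r1 else enum_rank_in h1 r2.
pose g : 'I_2 -> 'I_#|J| := fun j => if j == 0 then enum_rank_in ha a else enum_rank_in ha b.
have hB : mxsub f g (submx_set M I J) \in unitmx.
  rewrite unitmxE det22 unitfE !mxE /f /g /=.
  by rewrite !enum_rankK_in.
have e : mxsub f g (submx_set M I J) = rowsub f 1%:M *m (submx_set M I J *m colsub g 1%:M).
  by rewrite mulmx_colsub mulmx1 -mxsub_mul mul1mx.
have := mxrank_unit hB; rewrite e => <-.
apply: leq_trans (mxrankM_maxr _ _) _.
exact: mxrankM_maxl.
Qed.

Lemma F2_cases (x : 'F_2) : x = 0 \/ x = 1.
Proof. case: x => [[|[|k]] hk]; [left|right|by []]; exact/val_inj. Qed.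

Lemma F2_lin (S X0 X1 X2 : 'F_2) : S + X0 + X2 = 0 -> S + X1 + X0 = 0 -> S + X2 + X1 = 0 ->
  S = 0 /\ (S = X0 + X1 + X2 -> [/\ X0 = 0, X1 = 0 & X2 = 0]).
Proof.
by case: (F2_cases S) => ->; case: (F2_cases X0) => ->; case: (F2_cases X1) => ->;
  case: (F2_cases X2) => ->.
Qed.

Lemma F2_three (x0 x1 x2 y0 y1 y2 : 'F_2) :
  ~~ ((x0 == 0) && (y0 == 0)) -> ~~ ((x1 == 0) && (y1 == 0)) -> ~~ ((x2 == 0) && (y2 == 0)) ->
  ~~ ((x0 == x1) && (y0 == y1)) -> ~~ ((x0 == x2) && (y0 == y2)) -> ~~ ((x1 == x2) && (y1 == y2)) ->
  x0 + x1 + x2 = 0.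
Proof.
move=> h0 h1 h2 h3 h4 h5; move: h0 h1 h2 h3 h4 h5.
case: (F2_cases x0) => ->; case: (F2_cases x1) => ->; case: (F2_cases x2) => ->;
  case: (F2_cases y0) => ->; case: (F2_cases y1) => ->; case: (F2_cases y2) => ->;
  intros; apply/eqP; vm_compute in *; first [reflexivity | discriminate].
Qed.

Lemma rank_le1 (F : fieldType) s (M : 'M[F]_s) (I J : {set 'I_s}) (w : 'I_s -> F) :
  (forall i, i \in I -> exists c, forall j, j \in J -> M i j = c * w j) ->
  (\rank (submx_set M I J) <= 1)%N.
Proof.
move=> H.
apply: leq_trans (mxrankS (_ : (submx_set M I J <= \row_j w (enum_val j))%MS)) (rank_leq_row _).
apply/row_subP => i.
have [c hc] := H _ (enum_valP i).
have -> : row i (submx_set M I J) = c *: \row_j w (enum_val j).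
  by apply/rowP => j; rewrite !mxE hc // enum_valP.
exact: scalemx_sub (submx_refl _).
Qed.

Lemma no_s3 (M : 'M['F_2]_3) : M \in unitmx ->
  (forall I J : {set 'I_3}, #|I| = 2%N -> #|J| = 2%N -> \rank (submx_set M I J) = 2%N) -> False.
Proof.
move=> hU H.
have hA : forall r1 r2 a b, r1 != r2 -> a != b -> ~~ ((M r1 a == 0) && (M r1 b == 0)).
  move=> r1 r2 a b hr hab; apply/negP => /andP[/eqP e1 /eqP e2].
  have hr2 : \rank (submx_set M [set r1; r2] [set a; b]) = 2%N by apply: H; rewrite cards2 ?hr ?hab.
  suff : (\rank (submx_set M [set r1; r2] [set a; b]) <= 1)%N by rewrite hr2.
  apply: (@rank_le1 _ _ M _ _ (fun j => M r2 j)).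
  move=> i /set2P [->|->]; [exists 0 | exists 1] => j /set2P [->|->];
    by rewrite ?mul0r ?mul1r.
have hB : forall r1 r2 a b, r1 != r2 -> a != b -> ~~ ((M r1 a == M r2 a) && (M r1 b == M r2 b)).
  move=> r1 r2 a b hr hab; apply/negP => /andP[/eqP e1 /eqP e2].
  have hr2 : \rank (submx_set M [set r1; r2] [set a; b]) = 2%N by apply: H; rewrite cards2 ?hr ?hab.
  suff : (\rank (submx_set M [set r1; r2] [set a; b]) <= 1)%N by rewrite hr2.
  apply: (@rank_le1 _ _ M _ _ (fun j => M r1 j)).
  move=> i /set2P [->|->]; exists 1 => j /set2P [->|->];
    by rewrite ?mul1r.
have hcol : forall a, \sum_i M i a = 0.
  move=> a.
  pose b : 'I_3 := if a == 0 then 1 else 0.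
  have hab : a != b by rewrite /b; case: (a =P 0) => [->|/eqP].
  rewrite !big_ord_recl big_ord0 addr0 addrA.
  apply: F2_three (M _ b) (M _ b) (M _ b) _ _ _ _ _ _;
    [apply: (hA _ 1) | apply: (hA _ 0) | apply: (hA _ 0) | apply: hB | apply: hB | apply: hB] => //.
have : (const_mx 1 : 'rV['F_2]_3) *m M = 0.
  apply/rowP => j; rewrite !mxE; transitivity (\sum_i M i j); last exact: hcol.
  by apply: eq_bigr => i _; rewrite mxE mul1r.
move=> /(congr1 (mulmx^~ (invmx M))); rewrite mulmxK // mul0mx => /rowP /(_ 0).
by rewrite !mxE.
Qed.

Definition prv3 (k : nat) : nat := if k == 0%N then 2%N else k.-1.
Definition nxt3 (k : nat) : nat := if k == 2%N then 0%N else k.+1.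
Definition cyc (i j : nat) : bool := (j < 3)%N && (i == prv3 j).
Definition mb (i j : nat) : bool := ~~ ((i == j) || cyc i j).
Definition w01 a b := if mb a b then a else prv3 a.
Definition w10 a b := if mb b a then b else prv3 b.
Definition w11 a b := if (a < 3)%N then (if (b < 3)%N then 3%N else nxt3 a)
                      else (if (b < 3)%N then nxt3 b else 0%N).



Lemma comb a b : a != b ->
  [&& ~~ mb (w01 a b) a, mb (w01 a b) b, mb (w10 a b) a,
      ~~ mb (w10 a b) b, mb (w11 a b) a & mb (w11 a b) b].
Proof.
case: a => [|[|[|a]]]; case: b => [|[|[|b]]] //= hab;
  rewrite /w01 /w10 /w11 /mb /cyc /prv3 /nxt3 /= ?eqxx ?(negbTE hab) //=.
by move: hab; rewrite !eqSS eqxx => hab; rewrite [b == a]eq_sym (negbTE hab) /= !eqSS [b == a]eq_sym (negbTE hab) /= ?eqxx.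
Qed.

Definition Mc n : 'M['F_2]_(n.+4) := \matrix_(i, j) (mb i j)%:R.

Lemma two_in s (I : {set 'I_s}) : #|I| = s.-1 -> forall x y, x != y -> (x \in I) || (y \in I).
Proof.
move=> hI x y hxy; case: (boolP (x \in I)) => // hx; case: (boolP (y \in I)) => // hy; exfalso.
have hs : (0 < s)%N by case: s I hI x {y hxy hx hy} => [|s] _ _ [].
have sub : [set x; y] \subset ~: I.
  by apply/subsetP => z /set2P [->|->]; rewrite inE ?hx ?hy.
have := subset_leq_card sub; rewrite cards2 hxy.
have := cardsC I; rewrite card_ord hI.
lia.
Qed.

Lemma w01_lt a b N : (a < N)%N -> (3 <= N)%N -> (w01 a b < N)%N.
Proof. move=> *; rewrite /w01 /prv3; case: ifP => _; try case: ifP => _; lia. Qed.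
Lemma w10_lt a b N : (b < N)%N -> (3 <= N)%N -> (w10 a b < N)%N.
Proof. move=> *; rewrite /w10 /prv3; case: ifP => _; try case: ifP => _; lia. Qed.
Lemma w11_lt a b N : (4 <= N)%N -> (w11 a b < N)%N.
Proof. move=> *; rewrite /w11 /nxt3; case: ifP => ha3; case: ifP => hb3; try case: ifP => _; lia. Qed.

Ltac simp := rewrite ?(mul0r, mulr0, mul1r, mulr1, subr0, sub0r, oppr_eq0, oner_eq0).

Lemma good n (I J : {set 'I_(n.+4)}) : #|I| = n.+3 -> #|J| = 2%N ->
  \rank (submx_set (Mc n) I J) = 2%N.
Proof.
move=> hI hJ; move: (hJ) => /eqP/cards2P [a [b [hab eJ]]].
apply/eqP; rewrite eqn_leq; apply/andP; split.
  by apply: leq_trans (rank_leq_col _) _; rewrite hJ.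
have ha : a \in J by rewrite eJ !inE eqxx.
have hb : b \in J by rewrite eJ !inE eqxx orbT.
have hab' : val a != val b by [].
have := @comb _ _ hab'.
case/and5P => h1 h2 h3 h4 /andP [h5 h6].
have ltn_a := ltn_ord a; have ltn_b := ltn_ord b.
have lt01 : (w01 a b < n.+4)%N by apply: w01_lt.
have lt10 : (w10 a b < n.+4)%N by apply: w10_lt.
have lt11 : (w11 a b < n.+4)%N by apply: w11_lt.
pose x : 'I_(n.+4) := Ordinal lt01.
pose y : 'I_(n.+4) := Ordinal lt10.
pose z : 'I_(n.+4) := Ordinal lt11.
have hxy : x != y by apply/eqP => e; move: h1 h3; rewrite -[w10 a b]/(val y) -e /= => /negbTE ->.
have hxz : x != z by apply/eqP => e; move: h1 h5; rewrite -[w11 a b]/(val z) -e /= => /negbTE ->.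
have hyz : y != z by apply/eqP => e; move: h4 h6; rewrite -[w11 a b]/(val z) -e /= => /negbTE ->.
have E : forall r c : 'I_(n.+4), Mc n r c = (mb r c)%:R by move=> r c; rewrite mxE.
have key := @rank_ge2 _ _ (Mc n) I J _ _ a b _ _ ha hb.
have ixy := @two_in _ I hI _ _ hxy; have ixz := @two_in _ I hI _ _ hxz; have iyz := @two_in _ I hI _ _ hyz.
case: (boolP (x \in I)) => hx.
  case: (boolP (y \in I)) => hy.
    by apply: (key x y hx hy); rewrite !E [val x]/= [val y]/= (negbTE h1) h2 h3 (negbTE h4) ?mulr0n ?mulr1n; simp.
  have hz : z \in I by move: iyz; rewrite (negbTE hy).
  by apply: (key x z hx hz); rewrite !E [val x]/= [val z]/= (negbTE h1) h2 h5 h6 ?mulr0n ?mulr1n; simp.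
have hy : y \in I by move: ixy; rewrite (negbTE hx).
have hz : z \in I by move: ixz; rewrite (negbTE hx).
by apply: (key y z hy hz); rewrite !E [val y]/= [val z]/= h3 (negbTE h4) h5 h6 ?mulr0n ?mulr1n; simp.
Qed.

Lemma sum_delta (F : nzRingType) m (X : 'I_m -> F) (P : pred 'I_m) k :
  (forall i, P i = (i == k)) -> \sum_i X i * (P i)%:R = X k.
Proof.
move=> hP; rewrite (bigD1 k) //= hP eqxx mulr1 big1 ?addr0 // => i hik.
by rewrite hP (negbTE hik) mulr0.
Qed.

Lemma entry (i j : nat) : ((mb i j)%:R : 'F_2) = 1 + (i == j)%:R + (cyc i j)%:R.
Proof.
rewrite /mb; case: (i =P j) => [->|_] /=.
  have -> : cyc j j = false by rewrite /cyc /prv3; case: j => [|[|[|j]]].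
  by apply/eqP.
by case: (cyc i j) => //=; apply/eqP.
Qed.

Lemma ker n (x : 'rV['F_2]_(n.+4)) : x *m Mc n = 0 -> x = 0.
Proof.
move=> hx.
set S := \sum_i x 0 i.
have ordE (k : nat) (i : 'I_(n.+4)) : (k < n.+4)%N -> (i == inord k) = (val i == k).
  by move=> hk; rewrite -(inj_eq val_inj) /= inordK.
have eq (j : 'I_(n.+4)) :
    S + x 0 j + (if (val j < 3)%N then x 0 (inord (prv3 j)) else 0) = 0.
  have := congr1 (fun v : 'rV['F_2]_(n.+4) => v 0 j) hx; rewrite !mxE => h; rewrite -[RHS]h.
  have -> : \sum_i x 0 i * Mc n i j = \sum_i (x 0 i + x 0 i * (val i == val j)%:R + x 0 i * (cyc i j)%:R).
    by apply: eq_bigr => i _; rewrite mxE entry !mulrDr mulr1.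
  rewrite !big_split /=.
  congr (_ + _ + _).

    by rewrite (@sum_delta _ _ _ (fun i : 'I_(n.+4) => val i == val j) j) // => i; rewrite (inj_eq val_inj).
  case: ifP => hj.
    rewrite (@sum_delta _ _ _ (fun i : 'I_(n.+4) => cyc i j) (inord (prv3 j))) // => i.
    rewrite ordE /cyc ?hj //.
    by rewrite /prv3; case: (val j == 0%N) => //; apply: leq_ltn_trans (leq_pred _) (ltn_ord j).
  by rewrite big1 // => i _; rewrite /cyc hj mulr0.
pose i0 : 'I_(n.+4) := inord 0; pose i1 : 'I_(n.+4) := inord 1;
pose i2 : 'I_(n.+4) := inord 2.
have v0 : (i0 : nat) = 0%N by rewrite /= inordK.
have v1 : (i1 : nat) = 1%N by rewrite /= inordK.
have v2 : (i2 : nat) = 2%N by rewrite /= inordK.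
have E0 : S + x 0 i0 + x 0 i2 = 0 by have := eq i0; rewrite /= inordK.
have E1 : S + x 0 i1 + x 0 i0 = 0 by have := eq i1; rewrite /= inordK.
have E2 : S + x 0 i2 + x 0 i1 = 0 by have := eq i2; rewrite /= inordK.
have [hS himp] := @F2_lin _ _ _ _ E0 E1 E2.
have high (j : 'I_(n.+4)) : (3 <= val j)%N -> x 0 j = 0.
  move=> hj; have := eq j; rewrite hS add0r ltnNge hj /= addr0 //.
have n10 : i1 != i0 by apply/eqP => /(congr1 val); rewrite /= !inordK.
have n20 : i2 != i0 by apply/eqP => /(congr1 val); rewrite /= !inordK.
have n21 : i2 != i1 by apply/eqP => /(congr1 val); rewrite /= !inordK.
have hS' : S = x 0 i0 + x 0 i1 + x 0 i2.
  rewrite /S (bigD1 i0) // (bigD1 i1) /=; last by rewrite n10.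
  rewrite (bigD1 i2) /=; last by rewrite n20 n21.
  rewrite big1 ?addr0 ?addrA // => i /andP [/andP [ne0 ne1] ne2].
  apply: high; move: ne0 ne1 ne2; rewrite !ordE //.
  by case: (val i) => [|[|[|k]]].
have [z0 z1 z2] := himp hS'.
apply/rowP => j; rewrite mxE.
case: (ltnP (val j) 3) => hj; last exact: high.
have hj' : (nat_of_ord j < 3)%N := hj.
rewrite -[j]inord_val; move: hj'; case: (nat_of_ord j) => [|[|[|k]]] //.
Qed.

Lemma Mc_unit n : Mc n \in unitmx.
Proof.
rewrite -row_free_unit -kermx_eq0; apply/eqP/row_matrixP => i; rewrite row0.
by apply: ker; apply/eqP; rewrite -sub_kermx row_sub.
Qed.

Local Close Scope ring_scope.

Theorem mainTheorem15 (s : nat) (hs : (0 < s)%N) :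
  (exists M : 'M['F_2]_s, linear_AONT 2 s.-1 M) <-> (4 <= s)%N.
Proof.
split.
- case=> M [h1 h2 h3 hU H].
  case: s hs M h1 h2 h3 hU H => [|[|[|[|n]]]] // _ M _ _ _ hU H.
  exfalso; exact: (@no_s3 M hU H).
- case: s hs => [|[|[|[|n]]]] // _ _.
  exists (Mc n); split => //; first exact: Mc_unit.
  move=> I J hI hJ; exact: good.
Qed.
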